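(* Let $f \in \mathcal{S}^1_{\mu,L}(\mathbb{R}^d)$ with $0<\mu\le L$, let $x^\star$ be its unique minimizer, let $r\ge 2$, $0<s<1/L$, and $K := \max\left\{0, \frac{3r^2 - 4r - 12}{8}\right\}$. Let $\{x_k\},\{y_k\}$ be generated by NAG from $x_0=y_0\in\mathbb{R}^d$, and for integers $k\ge 1$ define \[ \mathcal{E}(k) := s(k+1)(k+r+1)\big(f(x_{k+1}) - f(x^\star)\big) + \frac12\Big\|(k-1)(x_k - x_{k-1}) + r(x_k - x^\star) - s(k+r)\nabla f(y_k)\Big\|^2 . \] Then for every integer $k\ge \max\{1,K\}$, \[ \mathcal{E}(k+1) - \mathcal{E}(k) \le -\mu s\cdot\frac{1 - Ls}{4}\cdot \mathcal{E}(k+1). \]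
   Context: $\mathcal{S}^1_{\mu,L}(\mathbb{R}^d)$ denotes the class of continuously differentiable convex functions $f:\mathbb{R}^d\to\mathbb{R}$ whose gradient is $L$-Lipschitz and which are $\mu$-strongly convex, $f(y)\ge f(x)+\langle\nabla f(x),y-x\rangle+\frac{\mu}{2}\|y-x\|^2$ for all $x,y$. NAG with step size $s$ and momentum parameter $r$ is the iteration, for $k \ge 0$: $x_{k+1} = y_k - s\nabla f(y_k)$, $\; y_{k+1} = x_{k+1} + \frac{k}{k+r+1}(x_{k+1} - x_k)$. *)

(* Defs.v *)
From HB Require Import structures.
From mathcomp Require Import all_boot all_order all_algebra.
From mathcomp Require Import all_classical all_reals all_analysis.
Set Implicit Arguments. Unset Strict Implicit. Unset Printing Implicit Defensive.
Import Order.TTheory GRing.Theory Num.Theory.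
Import numFieldNormedType.Exports.
Local Open Scope ring_scope.

Definition dotv {R : realType} {d : nat} (u v : 'rV[R]_d) : R :=
  \sum_(i < d) u ord0 i * v ord0 i.
Definition enorm {R : realType} {d : nat} (u : 'rV[R]_d) : R :=
  Num.sqrt (dotv u u).

Definition has_gradient {R : realType} {d : nat}
  (f : 'rV[R]_d -> R) (g : 'rV[R]_d -> 'rV[R]_d) : Prop :=
  forall x, differentiable f x /\ forall h, 'd f x h = dotv (g x) h.

Definition in_S1 {R : realType} {d : nat} (mu L : R)
  (f : 'rV[R]_d -> R) (g : 'rV[R]_d -> 'rV[R]_d) : Prop :=
  [/\ has_gradient f g,
      {in setT, continuous g},
      (forall x y, enorm (g x - g y) <= L * enorm (x - y))
    & (forall x y, f y >= f x + dotv (g x) (y - x) + mu / 2 * enorm (y - x) ^+ 2)].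

Fixpoint nag {R : realType} {d : nat} (g : 'rV[R]_d -> 'rV[R]_d) (s r : R)
  (x0 : 'rV[R]_d) (k : nat) : 'rV[R]_d * 'rV[R]_d :=
  match k with
  | 0%N => (x0, x0)
  | k'.+1 =>
      let p := nag g s r x0 k' in
      let xk := p.1 in let yk := p.2 in
      let xk1 := yk - s *: g yk in
      (xk1, xk1 + (k'%:R / (k'%:R + r + 1)) *: (xk1 - xk))
  end.

Definition nag_x {R : realType} {d : nat} g (s r : R) (x0 : 'rV[R]_d) k :=
  (nag g s r x0 k).1.
Definition nag_y {R : realType} {d : nat} g (s r : R) (x0 : 'rV[R]_d) k :=
  (nag g s r x0 k).2.

(* Lyapunov function E(k) (meaningful for k >= 1). *)
Definition nag_energy {R : realType} {d : nat} (f : 'rV[R]_d -> R) g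
  (s r : R) (x0 xstar : 'rV[R]_d) (k : nat) : R :=
  let x := nag_x g s r x0 in
  let y := nag_y g s r x0 in
  s * (k%:R + 1) * (k%:R + r + 1) * (f (x k.+1) - f xstar)
  + 1 / 2 * enorm ((k%:R - 1) *: (x k - x k.-1) + r *: (x k - xstar)
                    - (s * (k%:R + r)) *: g (y k)) ^+ 2.

(* Main.v *)
Set Warnings "-all".
Require Import Defs.
From HB Require Import structures.
From mathcomp Require Import all_boot all_order all_algebra.
From mathcomp Require Import all_classical all_reals all_analysis.
From mathcomp Require Import ring lra.
Import Order.TTheory GRing.Theory Num.Theory.
Local Open Scope ring_scope.
Section Dot.
Variables (R : realType) (d : nat).
Implicit Types (u v w : 'rV[R]_d) (a b : R).

Lemma dotvC u v : dotv u v = dotv v u.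
Proof. by rewrite /dotv; apply: eq_bigr => i _; rewrite mulrC. Qed.
Lemma dotvDl u v w : dotv (u + v) w = dotv u w + dotv v w.
Proof. by rewrite /dotv -big_split; apply: eq_bigr => i _; rewrite !mxE mulrDl. Qed.
Lemma dotvZl a u v : dotv (a *: u) v = a * dotv u v.
Proof. by rewrite /dotv mulr_sumr; apply: eq_bigr => i _; rewrite !mxE mulrA. Qed.
Lemma dotvNl u v : dotv (- u) v = - dotv u v.
Proof. by rewrite -scaleN1r dotvZl mulN1r. Qed.
Lemma dotvBl u v w : dotv (u - v) w = dotv u w - dotv v w.
Proof. by rewrite dotvDl dotvNl. Qed.
Lemma dotvDr u v w : dotv w (u + v) = dotv w u + dotv w v.
Proof. by rewrite dotvC dotvDl !(dotvC w). Qed.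
Lemma dotvZr a u v : dotv v (a *: u) = a * dotv v u.
Proof. by rewrite dotvC dotvZl dotvC. Qed.
Lemma dotvNr u v : dotv v (- u) = - dotv v u.
Proof. by rewrite dotvC dotvNl dotvC. Qed.
Lemma dotvBr u v w : dotv w (u - v) = dotv w u - dotv w v.
Proof. by rewrite dotvDr dotvNr. Qed.
Lemma dotv_ge0 u : 0 <= dotv u u.
Proof. by rewrite /dotv; apply: sumr_ge0 => i _; rewrite -expr2 sqr_ge0. Qed.
Lemma enorm2 u : enorm u ^+ 2 = dotv u u.
Proof. by rewrite /enorm sqr_sqrtr // dotv_ge0. Qed.

Definition dotE := (dotvDl, dotvDr, dotvBl, dotvBr, dotvZl, dotvZr, dotvNl, dotvNr).

Lemma dot_cs u h l : 0 < l -> dotv u u <= l ^+ 2 * dotv h h -> dotv u h <= l * dotv h h.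
Proof.
move=> l0 H.
have := dotv_ge0 (u - l *: h); rewrite !dotE (dotvC h u) => H2.
have : 2 * l * dotv u h <= 2 * l * (l * dotv h h) by nra.
by rewrite ler_pM2l; [|nra].
Qed.
End Dot.
Section Descent.
Variables (R : realType) (d : nat) (f : 'rV[R]_d -> R) (g : 'rV[R]_d -> 'rV[R]_d) (L : R).
Hypothesis L0 : 0 < L.
Hypothesis conv : forall x y, f x + dotv (g x) (y - x) <= f y.
Hypothesis lip : forall x y, dotv (g x - g y) (g x - g y) <= L ^+ 2 * dotv (x - y) (x - y).

Lemma descent_step x h e : 0 < e -> forall m : nat,
  f (x + (m%:R * e) *: h) - f x <= m%:R * e * dotv (g x) h
     + L * dotv h h * e ^+ 2 * (m%:R * (m%:R + 1) / 2).
Proof.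
move=> e0; elim=> [|m IH].
  by rewrite mul0r scale0r addr0 subrr !mul0r mulr0 addr0.
set z' := x + _ *: h; set z := x + _ *: h in IH.
have := conv z' z.
have -> : z - z' = (- e) *: h by apply/rowP => j; rewrite /z /z' !mxE -natr1; ring.
have -> : g z' = g x + (g z' - g x) by rewrite addrC subrK.
rewrite dotvZr dotvDl.
have hz : z' - x = ((m.+1)%:R * e) *: h by apply/rowP => j; rewrite /z' !mxE; ring.
have := lip z' x; rewrite hz dotvZl dotvZr => Hl.
have := @dot_cs R d (g z' - g x) h (L * ((m.+1)%:R * e)).
have hp : 0 < L * ((m.+1)%:R * e) by rewrite mulr_gt0 // mulr_gt0 // ltr0n.
move=> /(_ hp); rewrite exprMn => Hcs0.
have Hl' : dotv (g z' - g x) (g z' - g x) <= L ^+ 2 * ((m.+1)%:R * e) ^+ 2 * dotv h h.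
  by move: Hl; rewrite !expr2; lra.
have Hcs := Hcs0 Hl'.
move=> Hc.
rewrite -natr1.
have Hcs' : e * dotv (g z' - g x) h <= e * (L * ((m.+1)%:R * e) * dotv h h).
  by rewrite ler_pM2l.
rewrite -natr1 in Hcs'.
nra.
Qed.
End Descent.
Section Descent2.
Variables (R : realType) (d : nat) (f : 'rV[R]_d -> R) (g : 'rV[R]_d -> 'rV[R]_d) (L : R).
Hypothesis L0 : 0 < L.
Hypothesis conv : forall x y, f x + dotv (g x) (y - x) <= f y.
Hypothesis lip : forall x y, dotv (g x - g y) (g x - g y) <= L ^+ 2 * dotv (x - y) (x - y).

Lemma descent x h : f (x + h) <= f x + dotv (g x) h + L / 2 * dotv h h.
Proof.
apply/ler_addgt0Pr => eps eps0.
set C := L * dotv h h.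
have C0 : 0 <= C by rewrite mulr_ge0 ?dotv_ge0 // ltW.
have B0 : 0 <= C / (2 * eps) by rewrite divr_ge0 // mulr_ge0 // ltW.
set n := (Num.Def.archi_bound (C / (2 * eps))).+1.
have n0 : 0 < n%:R :> R by rewrite ltr0n.
have nb : C / (2 * eps) < n%:R.
  apply: (lt_trans (archi_boundP B0)); rewrite /n ltr_nat //.
have e0 : 0 < 1 / n%:R :> R by rewrite divr_gt0.
have := @descent_step R d f g L L0 conv lip x h _ e0 n.
have -> : n%:R * (1 / n%:R) = 1 :> R by rewrite mul1r mulfV // gt_eqF.
rewrite scale1r.
have H2 : C * (1 / n%:R) ^+ 2 * (n%:R * (n%:R + 1) / 2) = C / 2 + C / (2 * n%:R).
  by field; rewrite gt_eqF.
have H3 : C / (2 * n%:R) <= eps.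
  rewrite ler_pdivrMr ?mulr_gt0 //.
  move: nb; rewrite ltr_pdivrMr ?mulr_gt0 // => nb; nra.
rewrite /C in H2 H3 *.
rewrite mul1r in H2.
nra.
Qed.
End Descent2.
Lemma key_scalar (R : realType) (k r s L mu fx1 fx2 fy fs P Q G ab ag bg : R) :
  1 <= k -> 2 <= r -> 0 < s -> 0 < mu -> mu <= L -> L * s < 1 ->
  fx2 <= fy - s * G + L / 2 * (s * s * G) ->
  fy - ag + mu / 2 * P <= fx1 ->
  fy - bg + mu / 2 * Q <= fs ->
  fs <= fx2 ->
  0 <= G - 2 * mu * bg + mu * mu * Q ->
  0 <= P -> 0 <= Q -> 0 <= G ->
  forall N al be ga V1 V0 E1 E0, N = k + r + 1 -> al = k + 1 -> be = r -> ga = - (s * N) ->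
  0 <= al * al * P - 2 * al * be * ab + be * be * Q ->
  0 <= al * al * P - 2 * al * ga * ag + ga * ga * G ->
  0 <= be * be * Q - 2 * be * ga * bg + ga * ga * G ->
  V1 = al * al * P + be * be * Q + ga * ga * G + 2 * al * be * ab
            + 2 * al * ga * ag + 2 * be * ga * bg ->
  V0 = al * al * P + be * be * Q + 2 * al * be * ab ->
  E1 = s * (k + 1 + 1) * (k + 1 + r + 1) * (fx2 - fs) + 1 / 2 * V1 ->
  E0 = s * (k + 1) * (k + r + 1) * (fx1 - fs) + 1 / 2 * V0 ->
  E1 - E0 <= - (mu * s) * ((1 - L * s) / 4) * E1.
Proof.
move=> hk hr hs hmu hmL hLs H1 H2 H3 H4 H5 HP HQ HG N al be ga V1 V0 E1 E0 hN hal hbe hga H6a H6b H6c hV1 hV0 hE1 hE0.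
subst al be ga V1 V0 E1 E0.
set T := 1 - L * s.
have T0 : 0 < T by rewrite /T; lra.
have N0 : 0 < N by rewrite hN; lra.
have Ls0 : 0 <= L * s by rewrite mulr_ge0 // ltW // (lt_le_trans hmu hmL).
have hms : mu * s <= 1.
  have : mu * s <= L * s by rewrite ler_pM2r.
  lra.
have hag : fx2 - fx1 + mu / 2 * P + s * (1 - L * s / 2) * G <= ag by lra.
have hbg : fx2 - fs + mu / 2 * Q + s * (1 - L * s / 2) * G <= bg by lra.
set V1 := (k + 1) * (k + 1) * P + r * r * Q + (- (s * N)) * (- (s * N)) * G + 2 * (k + 1) * r * ab
            + 2 * (k + 1) * (- (s * N)) * ag + 2 * r * (- (s * N)) * bg.
set E1 := s * (k + 1 + 1) * (k + 1 + r + 1) * (fx2 - fs) + 1 / 2 * V1.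
have hA : E1 - (s * (k + 1) * (k + r + 1) * (fx1 - fs) + 1 / 2 * ((k + 1) * (k + 1) * P + r * r * Q + 2 * (k + 1) * r * ab))
         <= s * ((k + 2) * (N + 1) - N * N) * (fx2 - fs)
           - s * s * N * N * T / 2 * G - s * mu * N / 2 * ((k + 1) * P + r * Q).
  have c1 : 0 <= s * N * (k + 1) by rewrite !mulr_ge0 //; lra.
  have c2 : 0 <= s * N * r by rewrite !mulr_ge0 //; lra.
  have m1 := ler_wpM2l c1 hag.
  have m2 := ler_wpM2l c2 hbg.
  rewrite /E1 /V1 /T.
  rewrite hN in m1 m2 *.
  nra.
have hF2 : 2 * mu * (fx2 - fs) <= G.
  have : fx2 - fs <= bg - mu / 2 * Q.
    have : 0 <= s * (1 - L * s / 2) * G by rewrite !mulr_ge0 //; lra.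
    lra.
  nra.
have hV : V1 <= 3 * ((k + 1) * (k + 1) * P + r * r * Q + (- (s * N)) * (- (s * N)) * G) by rewrite /V1; lra.
have hF2c : (k + 2) * (N + 1) - N * N <= 0.
  have : 0 <= (r - 2) * k by rewrite mulr_ge0 //; lra.
  rewrite hN; nra.
have hcoefF : (mu * s) * (T / 4) * (s * (k + 1 + 1) * (k + 1 + r + 1) * (fx2 - fs))
     <= s * s * T * (k + 2) * (N + 1) / 8 * G.
  have e : (mu * s) * (T / 4) * (s * (k + 1 + 1) * (k + 1 + r + 1) * (fx2 - fs))
     = (s * s * T * (k + 2) * (N + 1) / 8) * (2 * mu * (fx2 - fs)) by rewrite hN; field.
  rewrite e; apply: ler_wpM2l => //.
  by rewrite !mulr_ge0 // ?ltW //; lra.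
have hcoefV : (mu * s) * (T / 4) * (1 / 2 * V1)
   <= (mu * s) * (T / 4) * (1 / 2 * (3 * ((k + 1) * (k + 1) * P + r * r * Q + (- (s * N)) * (- (s * N)) * G))).
  apply: ler_wpM2l; first by rewrite !mulr_ge0 // ?ltW //.
  lra.
have gG : s * s * T * ((k + 2) * (N + 1) / 8 + 3 * (mu * s) * N * N / 8 - N * N / 2) * G <= 0.
  apply: mulr_le0_ge0 => //.
  apply: mulr_ge0_le0; first by rewrite !mulr_ge0 // ltW.
  have : (mu * s) * (N * N) <= N * N by rewrite ler_piMl // mulr_ge0 // ltW.
  nra.
have gP : (mu * s) * (T / 4) * (1 / 2 * (3 * ((k + 1) * (k + 1) * P))) - s * mu * N / 2 * ((k + 1) * P) <= 0.
  have e : (mu * s) * (T / 4) * (1 / 2 * (3 * ((k + 1) * (k + 1) * P))) - s * mu * N / 2 * ((k + 1) * P)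
     = (mu * s) * (k + 1) * P * (3 * T * (k + 1) / 8 - N / 2) by field.
  rewrite e; apply: mulr_ge0_le0; first by rewrite !mulr_ge0 // ltW //; lra.
  have : 0 <= (1 - T) * (k + 1) by apply: mulr_ge0; rewrite /T; lra.
  rewrite hN; lra.
have gQ : (mu * s) * (T / 4) * (1 / 2 * (3 * (r * r * Q))) - s * mu * N / 2 * (r * Q) <= 0.
  have e : (mu * s) * (T / 4) * (1 / 2 * (3 * (r * r * Q))) - s * mu * N / 2 * (r * Q)
     = (mu * s) * r * Q * (3 * T * r / 8 - N / 2) by field.
  rewrite e; apply: mulr_ge0_le0; first by rewrite !mulr_ge0 // ltW //; lra.
  have : 0 <= (1 - T) * r by apply: mulr_ge0; rewrite /T; lra.
  rewrite hN; lra.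
have gF : s * ((k + 2) * (N + 1) - N * N) * (fx2 - fs) <= 0.
  apply: mulr_le0_ge0; last by lra.
  by apply: mulr_ge0_le0 => //; rewrite ltW.
have eE1 : - (mu * s) * ((1 - L * s) / 4) * E1 =
   - ((mu * s) * (T / 4) * (s * (k + 1 + 1) * (k + 1 + r + 1) * (fx2 - fs))
      + (mu * s) * (T / 4) * (1 / 2 * V1)) by rewrite /E1 /T; field.
rewrite eE1.
have eG : (mu * s) * (T / 4) * (1 / 2 * (3 * ((k + 1) * (k + 1) * P + r * r * Q + (- (s * N)) * (- (s * N)) * G)))
   = (mu * s) * (T / 4) * (1 / 2 * (3 * ((k + 1) * (k + 1) * P))) + (mu * s) * (T / 4) * (1 / 2 * (3 * (r * r * Q)))
     + 3 * (mu * s) * s * s * T * N * N / 8 * G by field.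
have eG2 : s * s * T * ((k + 2) * (N + 1) / 8 + 3 * (mu * s) * N * N / 8 - N * N / 2) * G
   = s * s * T * (k + 2) * (N + 1) / 8 * G + 3 * (mu * s) * s * s * T * N * N / 8 * G
     - s * s * N * N * T / 2 * G by field.
have eP : s * mu * N / 2 * ((k + 1) * P + r * Q) = s * mu * N / 2 * ((k + 1) * P) + s * mu * N / 2 * (r * Q) by field.
lra.
Qed.
Section Vec.
Variables (R : realType) (d : nat).
Implicit Types (u v w a b c : 'rV[R]_d).

Lemma dot3 (al be ga : R) a b c :
  dotv (al *: a + be *: b + ga *: c) (al *: a + be *: b + ga *: c) =
  al * al * dotv a a + be * be * dotv b b + ga * ga * dotv c c + 2 * al * be * dotv a b
  + 2 * al * ga * dotv a c + 2 * be * ga * dotv b c.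
Proof. rewrite !dotE (@dotvC _ _ b a) (@dotvC _ _ c a) (@dotvC _ _ c b); ring. Qed.

Lemma dot2 (al be : R) a b :
  dotv (al *: a + be *: b) (al *: a + be *: b) =
  al * al * dotv a a + be * be * dotv b b + 2 * al * be * dotv a b.
Proof. rewrite !dotE (@dotvC _ _ b a); ring. Qed.

Lemma dot2m (al be : R) a b :
  0 <= al * al * dotv a a - 2 * al * be * dotv a b + be * be * dotv b b.
Proof.
have := @dotv_ge0 _ _ (al *: a - be *: b); rewrite !dotE (@dotvC _ _ b a).
move=> H; apply: le_trans H _; rewrite le_eqVlt; apply/orP; left; apply/eqP; ring.
Qed.

Lemma vec_E0 (X0 X1 G0 Xs yk x1 y1 : 'rV[R]_d) (kp r s : R) : 0 <= kp -> 2 <= r ->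
  yk = X1 + (kp / (kp + r + 1)) *: (X1 - X0) ->
  x1 = yk - s *: G0 ->
  y1 = x1 + ((kp + 1) / ((kp + 1) + r + 1)) *: (x1 - X1) ->
  ((kp + 1) - 1) *: (X1 - X0) + r *: (X1 - Xs) - (s * ((kp + 1) + r)) *: G0
    = ((kp + 1) + 1) *: (y1 - x1) + r *: (y1 - Xs).
Proof.
move=> hk hr -> -> ->; apply/rowP => j; rewrite !mxE.
have h1 : kp + r + 1 != 0 by rewrite gt_eqF //; lra.
have h2 : kp + 1 + r + 1 != 0 by rewrite gt_eqF //; lra.
field; by rewrite h1 h2.
Qed.

Lemma vec_E1 (X1 x1 y1 Xs gg : 'rV[R]_d) (kk r s : R) : 0 <= kk -> 2 <= r ->
  y1 = x1 + (kk / (kk + r + 1)) *: (x1 - X1) ->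
  ((kk + 1) - 1) *: (x1 - X1) + r *: (x1 - Xs) - (s * ((kk + 1) + r)) *: gg
    = (kk + 1) *: (y1 - x1) + r *: (y1 - Xs) + (- (s * (kk + r + 1))) *: gg.
Proof.
move=> hk hr ->; apply/rowP => j; rewrite !mxE.
have h1 : kk + r + 1 != 0 by rewrite gt_eqF //; lra.
field; by rewrite h1.
Qed.
End Vec.
Theorem mainTheorem5 (R : realType) (d : nat) (mu L : R)
  (f : 'rV[R]_d -> R) (g : 'rV[R]_d -> 'rV[R]_d) (xstar x0 : 'rV[R]_d) (r s : R) :
  0 < mu -> mu <= L -> in_S1 mu L f g ->
  (forall x, f xstar <= f x) ->
  2 <= r -> 0 < s -> s < 1 / L ->
  forall k : nat, (1 <= k)%N ->
    Num.max 0 ((3 * r ^+ 2 - 4 * r - 12) / 8) <= k%:R ->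
    nag_energy f g s r x0 xstar k.+1 - nag_energy f g s r x0 xstar k
      <= - (mu * s) * ((1 - L * s) / 4) * nag_energy f g s r x0 xstar k.+1.
Proof.
move=> hmu hmL [_ _ hlip hsc] hmin hr hs hsL [//|k'] _ _.
have L0 : 0 < L := lt_le_trans hmu hmL.
have hLs : L * s < 1 by move: hsL; rewrite ltr_pdivlMr // mulrC.
have conv : forall x y, f x + dotv (g x) (y - x) <= f y.
  move=> x y; have := hsc x y; rewrite enorm2.
  have : 0 <= mu / 2 * dotv (y - x) (y - x) by rewrite mulr_ge0 ?dotv_ge0 // divr_ge0 // ltW.
  lra.
have lip2 : forall x y, dotv (g x - g y) (g x - g y) <= L ^+ 2 * dotv (x - y) (x - y).
  move=> x y; have := hlip x y; rewrite -!enorm2.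
  have : 0 <= enorm (g x - g y) by rewrite /enorm sqrtr_ge0.
  move=> h0 h1; rewrite -exprMn expr2 [X in _ <= X]expr2; nra.
set X0 := nag_x g s r x0 k'.
set X1 := nag_x g s r x0 k'.+1.
set yk := nag_y g s r x0 k'.+1.
set x1 := nag_x g s r x0 k'.+2.
set y1 := nag_y g s r x0 k'.+2.
set x2 := nag_x g s r x0 k'.+3.
have hyk : yk = X1 + (k'%:R / (k'%:R + r + 1)) *: (X1 - X0) by [].
have hx1 : x1 = yk - s *: g yk by [].
have hy1 : y1 = x1 + ((k'.+1)%:R / ((k'.+1)%:R + r + 1)) *: (x1 - X1) by [].
have hx2 : x2 = y1 - s *: g y1 by [].
rewrite /nag_energy /= -/X0 -/X1 -/yk -/x1 -/y1 -/x2.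
rewrite -[(k'.+1)%:R]natr1 in hy1.
rewrite -[(k'.+2)%:R]natr1 -[(k'.+1)%:R]natr1.
set kp := k'%:R.
have kp0 : 0 <= kp by rewrite /kp ler0n.
rewrite (@vec_E0 _ _ X0 X1 (g yk) xstar yk x1 y1 kp r s kp0 hr hyk hx1 hy1).
rewrite (@vec_E1 _ _ X1 x1 y1 xstar (g y1) (kp + 1) r s _ hr hy1); last lra.
rewrite !enorm2 dot3 dot2.
set a := y1 - x1. set b := y1 - xstar. set gg := g y1.
have hk : 1 <= kp + 1 by lra.
have H1 : f x2 <= f y1 - s * dotv gg gg + L / 2 * (s * s * dotv gg gg).
  have -> : x2 = y1 + (- s) *: gg by rewrite hx2 scaleNr.
  have := @descent R d f g L L0 conv lip2 y1 ((- s) *: gg).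
  rewrite dotvZr dotvZl dotvZr; lra.
have ha : x1 - y1 = - a by rewrite /a opprB.
have hb : xstar - y1 = - b by rewrite /b opprB.
have H2 : f y1 - dotv a gg + mu / 2 * dotv a a <= f x1.
  have := hsc y1 x1; rewrite ha enorm2 dotvNr dotvNl dotvNr opprK (@dotvC _ _ gg a); lra.
have H3 : f y1 - dotv b gg + mu / 2 * dotv b b <= f xstar.
  have := hsc y1 xstar; rewrite hb enorm2 dotvNr dotvNl dotvNr opprK (@dotvC _ _ gg b); lra.
have H4 := hmin x2.
have H5 : 0 <= dotv gg gg - 2 * mu * dotv b gg + mu * mu * dotv b b.
  have := @dot2m R d 1 mu gg b; rewrite (@dotvC _ _ gg b); lra.
have K := @key_scalar R (kp + 1) r s L mu (f x1) (f x2) (f y1) (f xstar)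
  (dotv a a) (dotv b b) (dotv gg gg) (dotv a b) (dotv a gg) (dotv b gg)
  hk hr hs hmu hmL hLs H1 H2 H3 H4 H5 (dotv_ge0 _ _ _) (dotv_ge0 _ _ _) (dotv_ge0 _ _ _)
  _ _ _ _ _ _ _ _ erefl erefl erefl erefl
  (dot2m _ _ _ _ _ _) (dot2m _ _ _ _ _ _) (dot2m _ _ _ _ _ _) erefl erefl erefl erefl.
exact: K.
Qed.
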